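(* In the setting described in the context, let $v_1,\dots,v_6$ be pairwise distinct vertices of $H$ with $v_2v_3,v_4v_5,v_6v_1\in E_H$ and $v_1v_2,v_3v_4,v_5v_6\notin E_H$, with $\ell_{v_2v_3}=\ell_1$, $\ell_{v_4v_5}=\ell_2$, $\ell_{v_6v_1}=\ell_3$, and suppose $\alpha=(\ell_1\vee\ell_2\vee\ell_3)$ is a clause of $\phi_1$ arising from this triple of edges. Then for every edge $e$ of $H$ with $\ell_e=\ell_2$ there exist vertices $a,b,c,d$ of $H$ such that $v_1,v_2,a,b,c,d$ are pairwise distinct, $v_2a,bc,dv_1\in E_H$, $v_1v_2,ab,cd\notin E_H$, $e=bc$, and $\ell_{v_2a}=\ell_1$, $\ell_{bc}=\ell_2$, $\ell_{dv_1}=\ell_3$ (i.e. an $AP_6$ with base $v_1v_2$ and ceiling $e$ carrying the literals $\ell_1,\ell_2,\ell_3$ in this order).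
   Context: Let $P$ be a partial order on $U=\{u_1,\dots,u_n\}$ and $V=\{v'_1,\dots,v'_n\}$ a disjoint copy (the vertex names $v_1,\dots,v_6$ in the claim are arbitrary vertices of $H$). Let $\widetilde E$ be the set of pairs $u_iv'_j$ with NOT $u_i<_Pu_j$. $H$ is the split graph on $U\cup V$ with edge set $E_H=\widetilde E\cup\{vv':v,v'\in V,v\ne v'\}$. Two edges $e,e'$ of $H$ are in conflict if there are vertices $w_1,\dots,w_4$ (not necessarily distinct) with $e=w_2w_3$, $e'=w_4w_1$ and $w_1w_2,w_3w_4\notin E_H$. The conflict graph $H^*$ has vertex set $E_H$, adjacency = conflict. Assume $H^*$ bipartite, fix a proper 2-coloring $\chi_0$ (red/blue), let $C_1,\dots,C_k$ be its components with variables $x_1,\dots,x_k$, and for $e\in C_i$ set $\ell_e=x_i$ if $e$ is red, $\ell_e=\overline{x_i}$ if blue. $\phi_1$ contains, for every set of three edges $e,e',e''$ of $H$ for which there are vertices $w_1,\dots,w_6$ (not necessarily distinct) with $e=w_2w_3$, $e'=w_4w_5$, $e''=w_6w_1$ and $w_1w_2,w_3w_4,w_5w_6\notin E_H$, and with $\ell_e\ne\overline{\ell_{e'}}$, $\ell_{e'}\ne\overline{\ell_{e''}}$, $\ell_e\ne\overline{\ell_{e''}}$, the two clauses $(\ell_e\vee\ell_{e'}\vee\ell_{e''})$ and $(\overline{\ell_e}\vee\overline{\ell_{e'}}\vee\overline{\ell_{e''}})$, and no other clauses. *)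

(* Defs.v *)
From mathcomp Require Import all_boot.
Set Implicit Arguments. Unset Strict Implicit. Unset Printing Implicit Defensive.

(* Vertices of H: inl i = u_i (in U), inr j = v'_j (in V). *)
Definition Vx (n : nat) : finType := ('I_n + 'I_n)%type.

Section Graph.
Variables (n : nat) (P : rel 'I_n).

Definition ltP (i j : 'I_n) : bool := (i != j) && P i j.

Definition adj (x y : Vx n) : bool :=
  match x, y with
  | inl i, inr j => ~~ ltP i j
  | inr j, inl i => ~~ ltP i j
  | inr j, inr j' => j != j'
  | inl _, inl _ => false
  end.

Definition nonedge (x y : Vx n) : bool := (x != y) && ~~ adj x y.

Definition edge (x y : Vx n) : {set Vx n} := [set x; y].

Definition isEdge (e : {set Vx n}) : bool :=
  [exists x, exists y, adj x y && (e == edge x y)].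

(* conflict relation = adjacency of H* (on the vertex set E_H) *)
Definition conflict (e f : {set Vx n}) : bool :=
  [&& isEdge e, isEdge f &
   [exists w1, exists w2, exists w3, exists w4,
      [&& e == edge w2 w3, f == edge w4 w1, nonedge w1 w2 & nonedge w3 w4]]].

(* the literal l_e: variable = (a canonical representative of) the
   component of e in H*, sign = the color of e under chi *)
Definition lit (chi : {set Vx n} -> bool) (e : {set Vx n})
  : {set Vx n} * bool := (root conflict e, chi e).

Definition litneg (l : {set Vx n} * bool) : {set Vx n} * bool := (l.1, ~~ l.2).

Definition phi1_triple (chi : {set Vx n} -> bool) (e e' e'' : {set Vx n}) : Prop :=
  (exists w1 w2 w3 w4 w5 w6 : Vx n,
     [/\ [/\ e = edge w2 w3, e' = edge w4 w5 & e'' = edge w6 w1],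
         [/\ isEdge e, isEdge e' & isEdge e''] &
         [/\ nonedge w1 w2, nonedge w3 w4 & nonedge w5 w6]]) /\
  [/\ lit chi e <> litneg (lit chi e'),
      lit chi e' <> litneg (lit chi e'') &
      lit chi e <> litneg (lit chi e'')].

End Graph.

(* Main.v *)
Require Import Defs.
From mathcomp Require Import all_boot.
Set Implicit Arguments. Unset Strict Implicit. Unset Printing Implicit Defensive.

Definition sd (n : nat) (x : Vx n) : bool := if x is inl _ then true else false.

Lemma adjC n (P : rel 'I_n) x y : adj P x y = adj P y x.
Proof. by case: x => i; case: y => j //=; rewrite eq_sym. Qed.

Lemma adj_irr n (P : rel 'I_n) x : adj P x x = false.
Proof. by case: x => i //=; rewrite eqxx. Qed.

Lemma adj_neq n (P : rel 'I_n) x y : adj P x y -> x != y.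
Proof. by apply: contraTneq => ->; rewrite adj_irr. Qed.

Lemma edgeC n (x y : Vx n) : edge x y = edge y x.
Proof. by rewrite /edge setUC. Qed.

Lemma edge_inj n (x y x' y' : Vx n) : edge x y = edge x' y' ->
  (x = x' /\ y = y') \/ (x = y' /\ y = x').
Proof.
move=> E.
have hx : x \in edge x' y' by rewrite -E !inE eqxx.
have hy : y \in edge x' y' by rewrite -E !inE eqxx orbT.
have hx' : x' \in edge x y by rewrite E !inE eqxx.
have hy' : y' \in edge x y by rewrite E !inE eqxx orbT.
move: hx hy hx' hy'; rewrite !inE.
case/orP=> /eqP ->; case/orP=> /eqP ->; rewrite ?eqxx /=.
- by move=> _ /orP [] /eqP ->; [left | right].
- by left.
- by right.
- by move=> /orP [] /eqP -> _; [left | right].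
Qed.

Lemma adj_side n (P : rel 'I_n) x y : adj P x y -> ~~ (sd x && sd y).
Proof. by case: x; case: y. Qed.

Lemma nonadj_side n (P : rel 'I_n) x y : x != y -> ~~ adj P x y -> sd x || sd y.
Proof. by case: x => i; case: y => j //= ; rewrite negbK => /eqP ? /eqP ?; subst. Qed.

Lemma sd_neq n (x y : Vx n) : sd x != sd y -> x != y.
Proof. by apply: contraNneq => ->. Qed.

Lemma isEdge_edge n (P : rel 'I_n) x y : adj P x y -> isEdge P (edge x y).
Proof. by move=> h; apply/existsP; exists x; apply/existsP; exists y; rewrite h eqxx. Qed.

Lemma isEdge_adj n (P : rel 'I_n) x y : isEdge P (edge x y) -> adj P x y.
Proof.
case/existsP=> x' /existsP [y' /andP [h /eqP /edge_inj [] [-> ->] //]].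
by rewrite adjC.
Qed.

Lemma conflict_intro n (P : rel 'I_n) w1 w2 w3 w4 :
  adj P w2 w3 -> adj P w4 w1 -> w1 != w2 -> ~~ adj P w1 w2 ->
  w3 != w4 -> ~~ adj P w3 w4 -> conflict P (edge w2 w3) (edge w4 w1).
Proof.
move=> a23 a41 n12 na12 n34 na34.
rewrite /conflict !isEdge_edge //=.
apply/existsP; exists w1; apply/existsP; exists w2; apply/existsP; exists w3.
apply/existsP; exists w4. by rewrite !eqxx /nonedge n12 na12 n34 na34.
Qed.

Lemma conflict_sym1 n (P : rel 'I_n) e f : conflict P e f -> conflict P f e.
Proof.
  case/and3P=> He Hf /existsP [w1 /existsP [w2 /existsP [w3 /existsP [w4]]]].
  case/and4P=> /eqP E /eqP F /andP [n12 na12] /andP [n34 na34].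
  rewrite /conflict He Hf /=.
  apply/existsP; exists w3; apply/existsP; exists w4; apply/existsP; exists w1.
  apply/existsP; exists w2. by rewrite E F /nonedge n12 na12 n34 na34 !eqxx.
Qed.

Lemma conflict_sym n (P : rel 'I_n) : symmetric (conflict P).
Proof. by move=> e f; apply/idP/idP; apply: conflict_sym1. Qed.

Lemma conflict_split n (P : rel 'I_n) e f b c :
  conflict P e f -> e = edge b c ->
  exists al de, [/\ f = edge al de, adj P al de,
     (al != b) && ~~ adj P al b & (de != c) && ~~ adj P de c].
Proof.
case/and3P=> _ Hf /existsP [w1 /existsP [w2 /existsP [w3 /existsP [w4]]]].
case/and4P=> /eqP E /eqP F /andP [n12 na12] /andP [n34 na34] Ee.
rewrite Ee in E; case: (edge_inj E) => [] [? ?]; subst.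
- exists w1, w4; split => //.
  + by rewrite edgeC.
  + by rewrite adjC; apply: isEdge_adj.
  + by rewrite n12.
  + by rewrite eq_sym n34 adjC.
- exists w4, w1; split => //.
  + by apply: isEdge_adj.
  + by rewrite eq_sym n34 adjC.
  + by rewrite n12.
Qed.

Lemma litneg_inv n (l : {set Vx n} * bool) : litneg (litneg l) = l.
Proof. by case: l => a b; rewrite /litneg /= negbK. Qed.

Lemma lit_conf n (P : rel 'I_n) (chi : {set Vx n} -> bool)
  (chi_proper : forall e f, conflict P e f -> chi e != chi f) e f :
  conflict P e f -> lit P chi f = litneg (lit P chi e).
Proof.
move=> h; rewrite /lit /litneg /=.
have cs : connect_sym (conflict P) by apply: sym_connect_sym; exact: conflict_sym.
have -> : root (conflict P) f = root (conflict P) e.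
  apply/eqP; rewrite (root_connect cs) cs; exact: connect1.
by move: (chi_proper _ _ h); case: (chi e); case: (chi f).
Qed.

Lemma alt6 (b1 b2 b3 b4 b5 b6 : bool) : b1 || b2 -> ~~ (b2 && b3) -> b3 || b4 ->
  ~~ (b4 && b5) -> b5 || b6 -> ~~ (b6 && b1) ->
  [/\ b2 = ~~ b1, b3 = b1, b4 = ~~ b1, b5 = b1 & b6 = ~~ b1].
Proof. by case: b1; case: b2; case: b3; case: b4; case: b5; case: b6. Qed.

Lemma swap2 (a b d c : bool) : a || b -> d || c -> ~~ (a && d) -> b != c ->
  a = ~~ b /\ d = ~~ c.
Proof. by case: a; case: b; case: c; case: d. Qed.

Unset Implicit Arguments.

Theorem lemma15 (n : nat) (P : rel 'I_n)
  (P_refl : reflexive P) (P_anti : antisymmetric P) (P_trans : transitive P)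
  (chi : {set Vx n} -> bool)
  (chi_proper : forall e f, conflict P e f -> chi e != chi f)
  (v1 v2 v3 v4 v5 v6 : Vx n) :
  uniq [:: v1; v2; v3; v4; v5; v6] ->
  adj P v2 v3 -> adj P v4 v5 -> adj P v6 v1 ->
  ~~ adj P v1 v2 -> ~~ adj P v3 v4 -> ~~ adj P v5 v6 ->
  phi1_triple P chi (edge v2 v3) (edge v4 v5) (edge v6 v1) ->
  forall e : {set Vx n}, isEdge P e ->
  lit P chi e = lit P chi (edge v4 v5) ->
  exists a b c d : Vx n,
    [/\ uniq [:: v1; v2; a; b; c; d],
        [/\ adj P v2 a, adj P b c & adj P d v1],
        [/\ ~~ adj P v1 v2, ~~ adj P a b & ~~ adj P c d],
        e = edge b c &
        [/\ lit P chi (edge v2 a) = lit P chi (edge v2 v3),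
            lit P chi (edge b c) = lit P chi (edge v4 v5) &
            lit P chi (edge d v1) = lit P chi (edge v6 v1)]].
Proof.
move=> U0 a23 a45 a61 n12 n34 n56 [_ [c12 c23 c13]] e _ Le.
set L1 := lit P chi (edge v2 v3) in c12 c13 *.
set L2 := lit P chi (edge v4 v5) in c12 c23 Le *.
set L3 := lit P chi (edge v6 v1) in c23 c13 *.
have LC := lit_conf chi_proper.
pose Inv (g : {set Vx n}) := exists a b c d : Vx n,
    [/\ uniq [:: v1; v2; a; b; c; d],
        [/\ adj P v2 a, adj P b c & adj P d v1],
        [/\ ~~ adj P v1 v2, ~~ adj P a b & ~~ adj P c d],
        g = edge b c &
        [/\ lit P chi (edge v2 a) = L1, lit P chi (edge b c) = L2 &
            lit P chi (edge d v1) = L3]].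
have step : forall g f g', Inv g -> conflict P g f -> conflict P f g' -> Inv g'.
  move=> g f g' [a [b [c [d [U [a2a abc adv] [_ nab ncd] Eg [La Lb Ld]]]]]] Cgf Cfg'.
  have [al [de [Ef aad /andP [nal nal'] /andP [nde nde']]]] := conflict_split Cgf Eg.
  have [be [ga [Eg' abg /andP [nbe nbe'] /andP [nga nga']]]] := conflict_split Cfg' Ef.
  move: U; rewrite /= !inE !negb_or -!andbA.
  case/and5P => d12 d1a d1b d1c /and5P [d1d d2a d2b d2c /and5P [d2d dab dac dad /and4P [dbc dbd dcd _]]].
  have [s2 sa sb sc sd'] := alt6 (nonadj_side d12 n12) (adj_side a2a)
     (nonadj_side dab nab) (adj_side abc) (nonadj_side dcd ncd) (adj_side adv).
  have sbc : sd b != sd c.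
    by rewrite sb sc; case: (sd v1).
  have [sal sde] := swap2 (nonadj_side nal nal') (nonadj_side nde nde') (adj_side aad) sbc.
  have sad : sd al != sd de by rewrite sal sde; move: sbc; case: (sd b); case: (sd c).
  have [sbe sga] := swap2 (nonadj_side nbe nbe') (nonadj_side nga nga') (adj_side abg) sad.
  have Lf : lit P chi f = litneg L2 by rewrite (LC _ _ Cgf) Eg Lb.
  have F1 : adj P v2 c.
    apply/negPn/negP => h.
    have hc : c != v2 by rewrite eq_sym.
    have h' : ~~ adj P c v2 by rewrite adjC.
    have := LC _ _ (conflict_intro abc a2a dab nab hc h').
    by rewrite La Lb.
  have F2 : adj P b v1.
    apply/negPn/negP => h.
    have hc : v1 != b by [].
    have h' : ~~ adj P v1 b by rewrite adjC.
    have := LC _ _ (conflict_intro abc adv hc h' dcd ncd).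
    by rewrite Ld Lb => E; apply: c23; rewrite E litneg_inv.
  have sal1 : sd al = sd v1 by rewrite sal sb negbK.
  have sde1 : sd de = ~~ sd v1 by rewrite sde sc.
  have sbe1 : sd be = ~~ sd v1 by rewrite sbe sal1.
  have sga1 : sd ga = sd v1 by rewrite sga sde1 negbK.
  have C1 : conflict P (edge c v2) (edge v1 d).
    have h1 : d != c by rewrite eq_sym.
    have h2 : ~~ adj P d c by rewrite adjC.
    have h3 : v2 != v1 by rewrite eq_sym.
    have h4 : ~~ adj P v2 v1 by rewrite adjC.
    by apply: conflict_intro => //; rewrite adjC.
  have Lc2 : lit P chi (edge c v2) = litneg L3.
    by have := LC _ _ C1; rewrite (edgeC v1 d) Ld => ->; rewrite litneg_inv.
  have G1 : adj P v2 al.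
    apply/negPn/negP => h.
    have h1 : al != v2 by apply: sd_neq; rewrite sal1 s2; case: (sd v1).
    have h2 : ~~ adj P al v2 by rewrite adjC.
    have h3 : c != de by rewrite eq_sym.
    have h4 : ~~ adj P c de by rewrite adjC.
    have h5 : adj P de al by rewrite adjC.
    have := LC _ _ (conflict_intro F1 h5 h1 h2 h3 h4).
    rewrite edgeC -Ef Lf (edgeC v2 c) Lc2 litneg_inv => E.
    by apply: c23; rewrite -E litneg_inv.
  have C2 : conflict P (edge b v1) (edge v2 a).
    by apply: conflict_intro.
  have Lb1 : lit P chi (edge b v1) = litneg L1.
    by rewrite -La (LC _ _ C2) litneg_inv.
  have G2 : adj P de v1.
    apply/negPn/negP => h.
    have h1 : de != v1 by apply: sd_neq; rewrite sde1; case: (sd v1).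
    have h3 : b != al by rewrite eq_sym.
    have h4 : ~~ adj P b al by rewrite adjC.
    have h5 : adj P v1 b by rewrite adjC.
    have := LC _ _ (conflict_intro h5 aad h1 h h3 h4).
    rewrite -Ef Lf (edgeC v1 b) Lb1 litneg_inv => E.
    by apply: c12; rewrite -E.
  have La' : lit P chi (edge v2 al) = L1.
    have C3 : conflict P (edge b v1) (edge v2 al) by apply: conflict_intro.
    by rewrite (LC _ _ C3) Lb1 litneg_inv.
  have Ld' : lit P chi (edge de v1) = L3.
    have h1 : de != c by [].
    have h2 : ~~ adj P de c by [].
    have h3 : v2 != v1 by rewrite eq_sym.
    have h4 : ~~ adj P v2 v1 by rewrite adjC.
    have h5 : adj P c v2 by rewrite adjC.
    have h6 : adj P v1 de by rewrite adjC.
    have C4 := conflict_intro h5 h6 h1 h2 h3 h4.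
    by rewrite edgeC (LC _ _ C4) Lc2 litneg_inv.
  have Lg' : lit P chi (edge be ga) = L2.
    by rewrite -Eg' (LC _ _ Cfg') Lf litneg_inv.
  have u1a : v1 != al by apply: (contraNneq _ n12) => ->; rewrite adjC.
  have u1b : v1 != be by apply: sd_neq; rewrite sbe1; case: (sd v1).
  have u1g : v1 != ga by apply: (contraNneq _ nga') => <-; rewrite adjC.
  have u1d : v1 != de by rewrite eq_sym; exact: adj_neq G2.
  have u2a : v2 != al by exact: adj_neq G1.
  have u2b : v2 != be by apply: (contraNneq _ nbe') => <-.
  have u2g : v2 != ga by apply: sd_neq; rewrite sga1 s2; case: (sd v1).
  have u2d : v2 != de by apply: (contraNneq _ n12) => ->; rewrite adjC.
  have uab : al != be by rewrite eq_sym.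
  have uag : al != ga by apply: (contraNneq _ nga') => <-.
  have uad : al != de by exact: adj_neq aad.
  have ubg : be != ga by exact: adj_neq abg.
  have ubd : be != de by apply: (contraNneq _ nbe') => ->; rewrite adjC.
  exists al, be, ga, de; split => //; last first.
    by split => //; rewrite adjC.
  by rewrite /= !inE !negb_or d12 u1a u1b u1g u1d u2a u2b u2g u2d uab uag uad ubg ubd nga.
have cs : connect_sym (conflict P) by apply: sym_connect_sym; exact: conflict_sym.
set g0 := edge v4 v5.
have base : Inv g0.
  by exists v3, v4, v5, v6; split.
have [Er Ec] : root (conflict P) e = root (conflict P) g0 /\ chi e = chi g0.
  by move: Le; rewrite /L2 /lit => -[-> ->].
have hcon : connect (conflict P) g0 e by rewrite -(root_connect cs) Er.
have key : forall p, path (conflict P) g0 p ->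
   (chi (last g0 p) = chi g0 -> Inv (last g0 p)) /\ (chi (last g0 p) = ~~ chi g0 -> exists g, Inv g /\ conflict P g (last g0 p)).
  elim/last_ind => [|p x IH] /=.
    by split => [_|]; [exact: base | case: (chi g0)].
  rewrite rcons_path last_rcons => /andP [Hp Hc].
  have [IH1 IH2] := IH Hp.
  have hx : chi x = ~~ chi (last g0 p).
    by move: (chi_proper _ _ Hc); case: (chi x); case: (chi (last g0 p)).
  split => Hx.
    have [g1 [Ig Cg]] : exists g2, Inv g2 /\ conflict P g2 (last g0 p).
      by apply: IH2; move: hx; rewrite Hx; case: (chi g0); case: (chi (last g0 p)).
    exact: step Ig Cg Hc.
  exists (last g0 p); split => //; apply: IH1.
  by move: hx; rewrite Hx; case: (chi g0); case: (chi (last g0 p)).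
case/connectP: hcon => p Hp Elast.
have [K _] := key p Hp.
by rewrite Elast; apply: K; rewrite -Elast.
Qed.
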